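(* Let $k\ge2$, $n,m\ge0$, and $M=k^m$. Let $F$ be a strategy for $k^n$ labeled chips at the root whose stable configuration is the permutation $\tau\in S_{k^n}$, and for each $i\in\{1,\dots,k^n\}$ let $F_i$ be a strategy for $k^m$ labeled chips at the root whose stable configuration is $\gamma_i\in S_{k^m}$. Start with $k^{n+m}$ chips labeled $1,\dots,k^{n+m}$ at the root. First perform the $F$-bundle with $M$ groups: for each $j\in\{1,\dots,M\}$, apply $F$ (via order-isomorphism) to the group of chips $\{j, M+j, 2M+j,\dots,(k^n-1)M+j\}$, using only vertices on layers $1,\dots,n$. Then, for each $i$, apply $F_i$ (via order-isomorphism, transported to the subtree) to the $k^m$ chips now on the $i$-th leftmost vertex of layer $n+1$, within the subtree rooted at that vertex. Then the resulting stable configuration is the inflation $\tau[\gamma_1,\dots,\gamma_{k^n}]$.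
   Context: Labeled chip-firing on the infinite rooted directed $k$-ary tree (each vertex has $k$ children ordered left to right, root on layer $1$, children of a layer-$t$ vertex on layer $t+1$): a vertex with at least $k$ chips may fire by choosing any $k$ of its chips and sending the $i$-th smallest label among them to its $i$-th leftmost child. A strategy is a sequence of legal firings continued until the configuration is stable (no vertex has $\ge k$ chips). Starting with $k^p$ chips at the root, every stable configuration has exactly one chip on each vertex of layer $p+1$ and none elsewhere, and is identified with the permutation (or, for arbitrary distinct labels, the sequence) of labels read from left to right on layer $p+1$. Since firing depends only on the relative order of labels, a strategy for chips $1,\dots,N$ can be applied to any set of $N$ distinct labels by letting the chip with the $r$-th smallest label play the role of chip $r$ (application via order-isomorphism); similarly a strategy at the root can be transported to the same firings in the subtree rooted at any vertex. Inflation: for $\tau\in S_n$ and permutations $\gamma_1,\dots,\gamma_n$, the inflation $\tau[\gamma_1,\dots,\gamma_n]$ is the permutation of length $|\gamma_1|+\cdots+|\gamma_n|$ consisting of $n$ consecutive blocks, where the $i$-th block is order-isomorphic to $\gamma_i$ and every choice of one entry from each block yields a sequence order-isomorphic to $\tau$. *)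

(* Defs.v *)
From mathcomp Require Import all_boot.
Set Implicit Arguments. Unset Strict Implicit. Unset Printing Implicit Defensive.

(* A vertex of the infinite rooted k-ary tree is the path from the root:
   the sequence of child indices (0 = leftmost child, ..., k-1 = rightmost).
   The root is [::]; a vertex on layer t is a path of length t-1. *)
Definition vertex := seq nat.

Definition config := nat -> vertex.

(* A firing: a vertex together with the k chosen chips. *)
Definition firing := (vertex * seq nat)%type.

Definition legal_firing (k : nat) (chips : seq nat) (pos : config)
  (f : firing) : bool :=
  [&& uniq f.2, size f.2 == k & all (fun c => (c \in chips) && (pos c == f.1)) f.2].

Definition fire (pos : config) (f : firing) : config :=
  fun c => if c \in f.2 then rcons f.1 (index c (sort leq f.2)) else pos c.

Fixpoint legal_run (k : nat) (chips : seq nat) (pos : config)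
  (fs : seq firing) : bool :=
  match fs with
  | [::] => true
  | f :: fs' => legal_firing k chips pos f && legal_run k chips (fire pos f) fs'
  end.

Definition run (pos : config) (fs : seq firing) : config := foldl fire pos fs.

Definition stable (k : nat) (chips : seq nat) (pos : config) : Prop :=
  forall v : vertex, count (fun c => pos c == v) chips < k.

Definition is_strategy (k : nat) (chips : seq nat) (pos : config)
  (fs : seq firing) : Prop :=
  legal_run k chips pos fs /\ stable k chips (run pos fs).

Definition root_config : config := fun _ => [::].

(* layer_paths k t = the vertices of layer t+1 (paths of length t),
   listed from left to right. *)
Fixpoint layer_paths (k t : nat) : seq vertex :=
  match t with
  | 0 => [:: [::]]
  | t'.+1 => [seq rcons v i | v <- layer_paths k t', i <- iota 0 k]
  end.

(* The configuration pos of the chips has exactly one chip on each vertex of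
   layer p+1 (and none elsewhere), and reading them left to right gives w. *)
Definition reads_as (k p : nat) (chips : seq nat) (pos : config)
  (w : seq nat) : Prop :=
  [/\ perm_eq w chips, size w = k ^ p &
      forall i, i < k ^ p -> pos (nth 0 w i) = nth [::] (layer_paths k p) i].

(* Applying a strategy for chips 1..N to a set L of N distinct labels via
   order-isomorphism: chip r is played by the r-th smallest label of L. *)
Definition apply_oi (L : seq nat) (fs : seq firing) : seq firing :=
  [seq (f.1, [seq nth 0 (sort leq L) r.-1 | r <- f.2]) | f <- fs].

Definition transport (u : vertex) (fs : seq firing) : seq firing :=
  [seq (u ++ f.1, f.2) | f <- fs].

Definition group (M K j : nat) : seq nat := [seq i * M + j | i <- iota 0 K].

Definition bundle (k n m : nat) (F : seq firing) : seq firing :=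
  flatten [seq apply_oi (group (k ^ m) (k ^ n) j) F | j <- iota 1 (k ^ m)].

Definition stage2 (k n : nat) (chips : seq nat) (pos1 : config)
  (Fs : nat -> seq firing) : seq firing :=
  flatten [seq transport (nth [::] (layer_paths k n) i.-1)
             (apply_oi [seq c <- chips | pos1 c == nth [::] (layer_paths k n) i.-1]
                       (Fs i))
          | i <- iota 1 (k ^ n)].

Definition composite (k n m : nat) (F : seq firing) (Fs : nat -> seq firing)
  : seq firing :=
  let B := bundle k n m F in
  B ++ stage2 k n (iota 1 (k ^ (n + m))) (run root_config B) Fs.

Definition order_iso (s t : seq nat) : Prop :=
  size s = size t /\
  forall i j, i < size s -> j < size s ->
    (nth 0 s i < nth 0 s j) = (nth 0 t i < nth 0 t j).

(* The i-th consecutive block (0-based) of pi, blocks having the sizes of gs. *)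
Definition block (gs : seq (seq nat)) (pi : seq nat) (i : nat) : seq nat :=
  take (size (nth [::] gs i)) (drop (sumn (map size (take i gs))) pi).

(* pi is the inflation tau[gs_1, ..., gs_n] (definition via its defining
   property): pi is a permutation of length |gs_1|+...+|gs_n| made of n
   consecutive blocks, block i order-isomorphic to gs_i, and every choice of
   one entry from each block is order-isomorphic to tau. *)
Definition is_inflation (tau : seq nat) (gs : seq (seq nat)) (pi : seq nat)
  : Prop :=
  [/\ size tau = size gs,
      perm_eq pi (iota 1 (sumn (map size gs))),
      (forall i, i < size gs -> order_iso (block gs pi i) (nth [::] gs i)) &
      (forall f : nat -> nat,
         (forall i, i < size gs -> f i < size (nth [::] gs i)) ->
         order_iso [seq nth 0 (block gs pi i) (f i) | i <- iota 0 (size gs)] tau)].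

(* Main.v *)
Require Import Defs.
From mathcomp Require Import all_boot zify.

Lemma rank_sorted (t : seq nat) c : sorted ltn t -> c \in t ->
  index c t = count (fun x => x < c) t.
Proof.
elim: t => // x t IH Hp.
have Hp' : path ltn x t := Hp.
have Ha : all (ltn x) t by apply: order_path_min Hp' => ? ? ?; exact: ltn_trans.
have Hs : sorted ltn t by apply: (path_sorted Hp').
rewrite in_cons; case: (eqVneq c x) => [-> _|Hne /= Hc]; rewrite /=.
  rewrite eqxx ltnn add0n; apply/esym/eqP; rewrite -leqn0 leqNgt -has_count; apply/hasPn => y Hy.
  by rewrite -leqNgt ltnW //; apply: (allP Ha).
have Hxc : x < c by apply: (allP Ha).
by rewrite Hxc IH // eq_sym (negbTE Hne).
Qed.

Lemma rank_sort (s : seq nat) c : uniq s -> c \in s ->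
  index c (sort leq s) = count (fun x => x < c) s.
Proof.
move=> Hu Hc; rewrite rank_sorted ?mem_sort //.
  by apply/permP; rewrite perm_sort.
by rewrite ltn_sorted_uniq_leq sort_uniq Hu sort_sorted //; exact: leq_total.
Qed.

Lemma legal_run_cat k C pos s1 s2 :
  legal_run k C pos (s1 ++ s2) = legal_run k C pos s1 && legal_run k C (run pos s1) s2.
Proof. by elim: s1 pos => //= f s1 IH pos; rewrite IH andbA. Qed.

Lemma run_cat pos s1 s2 : run pos (s1 ++ s2) = run (run pos s1) s2.
Proof. by rewrite /run foldl_cat. Qed.

Definition gmap (u : vertex) (phi : nat -> nat) (fs : seq firing) : seq firing :=
  [seq (u ++ f.1, map phi f.2) | f <- fs].

Lemma sim (phi : nat -> nat) (C C' : seq nat) k u pos0 pos fs :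
  {in C &, forall x y, x < y -> phi x < phi y} ->
  {in C, forall c, phi c \in C'} ->
  {in C, forall c, pos (phi c) = u ++ pos0 c} ->
  legal_run k C pos0 fs ->
  [/\ legal_run k C' pos (gmap u phi fs),
      {in C, forall c, run pos (gmap u phi fs) (phi c) = u ++ run pos0 fs c} &
      forall d, (forall c, c \in C -> d != phi c) -> run pos (gmap u phi fs) d = pos d].
Proof.
move=> Hmono HC'.
have Hinj : {in C &, injective phi}.
  move=> x y Hx Hy Hxy; apply/eqP; case: (ltngtP x y) => // H.
    by have := Hmono _ _ Hx Hy H; rewrite Hxy ltnn.
  by have := Hmono _ _ Hy Hx H; rewrite Hxy ltnn.
have Hlt : {in C &, forall x y, (phi x < phi y) = (x < y)}.
  move=> x y Hx Hy; case: (ltngtP x y) => H.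
  - exact: Hmono.
  - by apply/negbTE; rewrite -leqNgt ltnW // Hmono.
  - by rewrite H ltnn.
elim: fs pos0 pos => [|f fs IH] pos0 pos Hpos /=.
  by move=> _; split.
case/andP=> Hf Hrest.
case/and3P: Hf => Hu Hsz /allP Hall.
have Hsub : {subset f.2 <= C} by move=> c /Hall /andP[].
have Hmem : {in C, forall c, (phi c \in map phi f.2) = (c \in f.2)}.
  move=> c Hc; apply/idP/idP; last exact: map_f.
  by case/mapP=> c' Hc' Heq; rewrite (Hinj _ _ Hc (Hsub _ Hc') Heq).
set pos1 := fire pos (u ++ f.1, map phi f.2).
set pos01 := fire pos0 f.
have Hpos1 : {in C, forall c, pos1 (phi c) = u ++ pos01 c}.
  move=> c Hc; rewrite /pos1 /pos01 /fire /= Hmem //.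
  case: ifP => Hcf; last exact: Hpos.
  rewrite -rcons_cat; congr rcons.
  have Hu2 : uniq (map phi f.2).
    by rewrite map_inj_in_uniq // => x y /Hsub Hx /Hsub Hy; apply: Hinj.
  rewrite !rank_sort //; last exact: map_f.
  rewrite count_map; apply: eq_in_count => x /Hsub Hx /=; exact: Hlt.
have [IH1 IH2 IH3] := IH pos01 pos1 Hpos1 Hrest.
split.
- rewrite IH1 andbT /legal_firing /= size_map Hsz.
  rewrite map_inj_in_uniq; last by move=> x y /Hsub Hx /Hsub Hy; apply: Hinj.
  rewrite Hu /=; apply/allP => d /mapP [c Hc ->].
  have /andP[Hc1 /eqP Hc2] := Hall c Hc.
  by rewrite HC' //= Hpos // Hc2.
- exact: IH2.
- move=> d Hd; rewrite IH3 // /pos1 /fire /=.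
  case: ifP => // /mapP [c Hc Hdc]; move: (Hd c (Hsub _ Hc)); by rewrite Hdc eqxx.
Qed.

Definition phiL (L : seq nat) (r : nat) := nth 0 (sort leq L) r.-1.

Lemma phiL_mono L : uniq L ->
  {in iota 1 (size L) &, forall x y, x < y -> phiL L x < phiL L y}.
Proof.
move=> Hu x y; rewrite !mem_iota => /andP[Hx1 Hx2] /andP[Hy1 Hy2] Hxy.
have Hs : sorted ltn (sort leq L).
  by rewrite ltn_sorted_uniq_leq sort_uniq Hu sort_sorted //; exact: leq_total.
move: Hx1 Hx2 Hy1 Hy2 Hxy; case: x => // x; case: y => // y /= *.
apply: (sorted_ltn_nth ltn_trans 0 Hs); rewrite ?inE ?size_sort; lia.
Qed.

Lemma phiL_mem L r : r \in iota 1 (size L) -> phiL L r \in L.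
Proof.
rewrite mem_iota => /andP[H1 H2]; rewrite /phiL -(mem_sort leq) mem_nth // size_sort; move: H1 H2; case: r => //= r; lia.
Qed.

Arguments phiL_mono {L}.
Arguments phiL_mem {L r}.

Lemma transport_gmap u L fs : transport u (apply_oi L fs) = gmap u (phiL L) fs.
Proof. by elim: fs => //= f fs ->. Qed.

Lemma par_L k C' pos (s : seq nat) (L : nat -> seq nat) (u : nat -> vertex)
  (fs : nat -> seq firing) :
  uniq s -> (forall j, j \in s -> uniq (L j)) ->
  (forall j, j \in s -> {subset L j <= C'}) ->
  (forall j j' d, j \in s -> j' \in s -> d \in L j -> d \in L j' -> j = j') ->
  (forall j d, j \in s -> d \in L j -> pos d = u j) ->
  (forall j, j \in s -> legal_run k (iota 1 (size (L j))) root_config (fs j)) ->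
  let G := flatten [seq transport (u j) (apply_oi (L j) (fs j)) | j <- s] in
  [/\ legal_run k C' pos G,
   (forall j r, j \in s -> 1 <= r <= size (L j) ->
      run pos G (phiL (L j) r) = u j ++ run root_config (fs j) r) &
   (forall d, (forall j, j \in s -> d \notin L j) -> run pos G d = pos d)].
Proof.
elim: s pos => [|j s IH] pos Hus HuL HC' Hdis Hpos Hleg G.
  by split.
rewrite /G /= transport_gmap.
move: Hus => /= /andP[Hjs Hus].
have Hj : j \in j :: s by rewrite inE eqxx.
have Hb : forall x, x \in s -> x \in j :: s by move=> x H; rewrite inE H orbT.
have Hsim := @sim (phiL (L j)) (iota 1 (size (L j))) C' k (u j) root_config pos (fs j)
  (phiL_mono (HuL j Hj)) (fun c Hc => HC' j Hj _ (phiL_mem Hc))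
  (fun c Hc => etrans (Hpos j _ Hj (phiL_mem Hc)) (esym (cats0 _))) (Hleg j Hj).
case: Hsim => S1 S2 S3.
set pos1 := run pos (gmap (u j) (phiL (L j)) (fs j)).
have Hnot : forall j' d, j' \in s -> d \in L j' -> d \notin L j.
  move=> j' d Hj' Hd; apply/negP => Hd'.
  have Ejj := Hdis j j' d Hj (Hb _ Hj') Hd' Hd.
  by move: Hjs; rewrite Ejj Hj'.
have Hpos1 : forall j' d, j' \in s -> d \in L j' -> pos1 d = u j'.
  move=> j' d Hj' Hd; rewrite /pos1 S3.
    by apply: Hpos (Hb _ Hj') Hd.
  move=> c Hc; apply/eqP => E; move: (Hnot j' d Hj' Hd); by rewrite E phiL_mem.
have [I1 I2 I3] := IH pos1 Hus (fun j' H => HuL j' (Hb _ H))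
  (fun j' H => HC' j' (Hb _ H))
  (fun j1 j2 d H1 H2 => Hdis j1 j2 d (Hb _ H1) (Hb _ H2)) Hpos1
  (fun j' H => Hleg j' (Hb _ H)).
split.
- by rewrite legal_run_cat S1.
- move=> j' r; rewrite inE => /orP [/eqP -> Hr|Hj' Hr]; rewrite run_cat.
    rewrite I3; first by rewrite /pos1 S2 // mem_iota; lia.
    move=> j2 Hj2; apply/negP => Hd.
    have := Hnot j2 _ Hj2 Hd; by rewrite phiL_mem // mem_iota; lia.
  exact: I2.
- move=> d Hd; rewrite run_cat I3; last by move=> j2 Hj2; apply: Hd; exact: Hb _ _.
  rewrite /pos1 S3 // => c Hc; apply/eqP => E.
  by move: (Hd j Hj); rewrite E phiL_mem.
Qed.

Lemma size_layer k t : size (layer_paths k t) = k ^ t.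
Proof. by elim: t => //= t IH; rewrite size_allpairs IH size_iota expnS mulnC. Qed.

Lemma uniq_layer k t : uniq (layer_paths k t).
Proof.
elim: t => //= t IH; apply: allpairs_uniq => //; first exact: iota_uniq.
by move=> [v i] [v' i'] _ _ /= /rcons_inj [-> ->].
Qed.

Lemma nth_allp k (s : seq vertex) a b : a < size s -> b < k ->
  nth [::] [seq rcons v i | v <- s, i <- iota 0 k] (a * k + b) = rcons (nth [::] s a) b.
Proof.
elim: s a => // v s IH [|a] /= Ha Hb.
  by rewrite nth_cat size_map size_iota Hb (nth_map 0) ?size_iota // nth_iota.
rewrite nth_cat size_map size_iota ifN; last by rewrite -leqNgt; nia.
have -> : a.+1 * k + b - k = a * k + b by nia.
by rewrite IH.
Qed.

Lemma nth_layer_add k n m a b : 0 < k -> a < k ^ n -> b < k ^ m ->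
  nth [::] (layer_paths k (n + m)) (a * k ^ m + b) =
  nth [::] (layer_paths k n) a ++ nth [::] (layer_paths k m) b.
Proof.
move=> Hk; elim: m b => [|m IH] b Ha Hb.
  by move: Hb; rewrite expn0 addn0 muln1 ltnS leqn0 => /eqP ->; rewrite addn0 /= cats0.
have Hb1 : b %/ k < k ^ m by rewrite ltn_divLR // -expnSr.
have Hb2 : b %% k < k by rewrite ltn_mod.
have -> : a * k ^ m.+1 + b = (a * k ^ m + b %/ k) * k + b %% k.
  rewrite {1}(divn_eq b k) expnSr; lia.
rewrite addnS /= nth_allp //; last by rewrite size_layer expnD; nia.
rewrite IH // rcons_cat; congr (_ ++ _).
by rewrite [in RHS](divn_eq b k) /= nth_allp // size_layer.
Qed.

Lemma transport_nil fs : transport [::] fs = fs.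
Proof. by elim: fs => //= [[v l] fs ->]. Qed.

Lemma sorted_shift (t M : nat) : sorted leq [seq t * M + j | j <- iota 1 M].
Proof.
rewrite sorted_map; apply: sub_sorted (iota_sorted 1 M) => x y /= H.
by rewrite leq_add2l.
Qed.

Lemma group_sorted M K j : sorted leq (group M K j).
Proof.
rewrite /group sorted_map; apply: sub_sorted (iota_sorted 0 K) => x y /= H.
by rewrite leq_add2r leq_mul2r H orbT.
Qed.

Lemma phiL_group M K j r : 1 <= r <= K -> phiL (group M K j) r = r.-1 * M + j.
Proof.
move=> Hr; rewrite /phiL sorted_sort; last exact: group_sorted.
  rewrite /group (nth_map 0) ?size_iota ?nth_iota //; move: Hr; case: r => //= r; lia.
exact: leq_trans.
Qed.

Lemma cmp_aux M t t' g g' : 0 < t -> 0 < t' -> t != t' -> 0 < g <= M -> 0 < g' <= M ->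
  (t.-1 * M + g < t'.-1 * M + g') = (t < t').
Proof.
case: t => // t; case: t' => // t' /= _ _ Hne Hg Hg'; rewrite ltnS.
case: (ltngtP t t') => H.
- apply/idP; have : t * M + M <= t' * M by rewrite addnC -mulSn leq_mul2r H orbT.
  lia.
- apply/negbTE; rewrite -leqNgt.
  have : t' * M + M <= t * M by rewrite addnC -mulSn leq_mul2r H orbT.
  lia.
- by move: Hne; rewrite H eqxx.
Qed.

Lemma ar1 i q K M : i < K -> q < M -> i * M + q < K * M.
Proof. move=> Hi Hq; have : i.+1 * M <= K * M by rewrite leq_mul2r Hi orbT. rewrite mulSn; lia. Qed.

Lemma ar2 i K M : i < K -> M <= K * M - i * M.
Proof. move=> Hi; have : i.+1 * M <= K * M by rewrite leq_mul2r Hi orbT. rewrite mulSn; lia. Qed.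

Theorem proposition4p1 (k n m : nat) (F : seq firing) (tau : seq nat)
  (Fs : nat -> seq firing) (gamma : nat -> seq nat) :
  2 <= k ->
  is_strategy k (iota 1 (k ^ n)) root_config F ->
  reads_as k n (iota 1 (k ^ n)) (run root_config F) tau ->
  (forall i, 1 <= i <= k ^ n ->
     is_strategy k (iota 1 (k ^ m)) root_config (Fs i) /\
     reads_as k m (iota 1 (k ^ m)) (run root_config (Fs i)) (gamma i)) ->
  is_strategy k (iota 1 (k ^ (n + m))) root_config (composite k n m F Fs) /\
  exists pi : seq nat,
    reads_as k (n + m) (iota 1 (k ^ (n + m)))
      (run root_config (composite k n m F Fs)) pi /\
    is_inflation tau [seq gamma i | i <- iota 1 (k ^ n)] pi.
Proof.
move=> Hk [HFleg _] [Htau_perm Htau_sz Htau_pos] HFs.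
set K := k ^ n. set M := k ^ m.
rewrite -/K in Htau_sz Htau_pos HFs.
have HFs2 : forall i, 1 <= i <= K -> _ := HFs. rewrite -/M in HFs2. clear HFs.
have Kpos : 0 < K by rewrite expn_gt0; lia.
have Mpos : 0 < M by rewrite expn_gt0; lia.
have EKM : k ^ (n + m) = K * M by rewrite expnD.
set C' := iota 1 (k ^ (n + m)).
have HC'm : forall d, (d \in C') = (0 < d <= K * M) by move=> d; rewrite /C' mem_iota EKM; lia.
have HtauU : uniq tau by rewrite (perm_uniq Htau_perm) iota_uniq.
have Htau_mem : forall a, a < K -> 1 <= nth 0 tau a <= K.
  move=> a Ha; have : nth 0 tau a \in iota 1 K by rewrite -(perm_mem Htau_perm) mem_nth // Htau_sz.
  rewrite mem_iota; lia.
set u := fun a => nth [::] (layer_paths k n) a.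
have Hu_inj : forall a b, a < K -> b < K -> u a = u b -> a = b.
  move=> a b Ha Hb E; apply/eqP; rewrite -(nth_uniq [::] _ _ (uniq_layer k n)) ?size_layer //.
  by apply/eqP.
set B := bundle k n m F.
have EB : B = flatten [seq transport ((fun _ => [::]) j) (apply_oi (group M K j) ((fun _ => F) j)) | j <- iota 1 M].
  by rewrite /B /bundle; congr flatten; apply: eq_map => j; rewrite transport_nil.
have G1 : forall j, j \in iota 1 M -> uniq (group M K j).
  move=> j _; rewrite map_inj_uniq ?iota_uniq // => x y /eqP.
  by rewrite eqn_add2r eqn_pmul2r // => /eqP.
have G2 : forall j, j \in iota 1 M -> {subset group M K j <= C'}.
  move=> j; rewrite mem_iota => Hj d /mapP [i]; rewrite mem_iota /C' EKM mem_iota => Hi ->.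
  nia.
have G3 : forall j j' d, j \in iota 1 M -> j' \in iota 1 M -> d \in group M K j ->
    d \in group M K j' -> j = j'.
  move=> j j' d; rewrite !mem_iota => Hj Hj' /mapP [i _ ->] /mapP [i' _ E].
  case: (ltngtP i i') => Hii.
  - nia.
  - nia.
  - subst i'; lia.
have G4 : forall j d, j \in iota 1 M -> d \in group M K j -> root_config d = [::] by [].
have G5 : forall j, j \in iota 1 M -> legal_run k (iota 1 (size (group M K j))) root_config F.
  by move=> j _; rewrite size_map size_iota.
have [S1 S2 _] := @par_L k C' root_config (iota 1 M) (group M K) (fun _ => [::]) (fun _ => F)
  (iota_uniq _ _) G1 G2 G3 G4 G5.
rewrite -EB in S1 S2.
set pos1 := run root_config B.
have pos1_char : forall r j, 1 <= r <= K -> 1 <= j <= M -> pos1 (r.-1 * M + j) = run root_config F r.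
  move=> r j Hr Hj; rewrite -(@phiL_group M K) // /pos1 S2 //; first by rewrite mem_iota; lia.
  by rewrite size_map size_iota.
set L := fun i => [seq c <- C' | pos1 c == u i.-1].
set Bl := fun a => [seq (nth 0 tau a).-1 * M + j | j <- iota 1 M].
have HL : forall a, a < K -> perm_eq (L a.+1) (Bl a).
  move=> a Ha; apply: uniq_perm.
  - exact: filter_uniq (iota_uniq _ _).
  - by rewrite map_inj_uniq ?iota_uniq // => x y /eqP; rewrite eqn_add2l => /eqP.
  - move=> d; rewrite mem_filter /=; apply/andP/mapP.
    + case => /eqP Hd; rewrite /C' EKM mem_iota => Hdr.
      set r := ((d - 1) %/ M).+1. set j := ((d - 1) %% M).+1.
      have Ed : d = r.-1 * M + j by rewrite /r /j /=; have := divn_eq (d - 1) M; lia.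
      have Hr : 1 <= r <= K by rewrite /r ltnS ltn_divLR //; lia.
      have Hj : 1 <= j <= M by rewrite /j ltn_mod.
      move: Hd; rewrite Ed pos1_char // => Hd.
      have rin : r \in tau by rewrite (perm_mem Htau_perm) mem_iota; lia.
      have Hb : index r tau < K by rewrite -Htau_sz index_mem.
      have Er : nth 0 tau (index r tau) = r by apply: nth_index.
      move: Hd; rewrite -Er Htau_pos // => /(Hu_inj _ _ Hb Ha) Hba.
      by exists j; [rewrite mem_iota; lia | rewrite Hba].
    + case=> j; rewrite mem_iota => Hj ->; split.
        have := Htau_mem a Ha => Ht.
        by rewrite pos1_char // Htau_pos.
      rewrite HC'm; have := Htau_mem a Ha; nia.
have HsizeL : forall a, a < K -> size (L a.+1) = M.
  by move=> a Ha; rewrite (perm_size (HL a Ha)) size_map size_iota.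
have HphiL : forall a r, a < K -> 1 <= r <= M -> phiL (L a.+1) r = (nth 0 tau a).-1 * M + r.
  move=> a r Ha Hr; rewrite /phiL.
  have /(perm_sortP leq_total leq_trans anti_leq) -> := HL a Ha.
  rewrite sorted_sort; last exact: sorted_shift.
    rewrite /Bl (nth_map 0) ?size_iota ?nth_iota; move: Hr; case: r => //= r; lia.
  exact: leq_trans.
set u' := fun i => u i.-1.
have H1 : forall i, i \in iota 1 K -> uniq (L i) by move=> i _; exact: filter_uniq (iota_uniq _ _).
have H2 : forall i, i \in iota 1 K -> {subset L i <= C'} by move=> i _ d; rewrite mem_filter => /andP[].
have H3 : forall i i' d, i \in iota 1 K -> i' \in iota 1 K -> d \in L i -> d \in L i' -> i = i'.
  move=> i i' d; rewrite !mem_iota !mem_filter => Hi Hi' /andP[/eqP E1 _] /andP[/eqP E2 _].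
  have : i.-1 = i'.-1 by apply: Hu_inj; [lia | lia | rewrite -E1 -E2].
  lia.
have H4 : forall i d, i \in iota 1 K -> d \in L i -> pos1 d = u' i.
  by move=> i d _; rewrite mem_filter => /andP[/eqP].
have H5 : forall i, i \in iota 1 K -> legal_run k (iota 1 (size (L i))) root_config (Fs i).
  move=> i; rewrite mem_iota => Hi.
  have -> : i = i.-1.+1 by lia.
  rewrite HsizeL; last by lia.
  by have [[] ] := HFs2 i.-1.+1 ltac:(lia).
have [T1 T2 _] := @par_L k C' pos1 (iota 1 K) L u' Fs (iota_uniq _ _) H1 H2 H3 H4 H5.
have E2 : stage2 k n C' pos1 Fs = flatten [seq transport (u' i) (apply_oi (L i) (Fs i)) | i <- iota 1 K] := erefl.
rewrite -E2 in T1 T2.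
have Ecomp : run root_config (composite k n m F Fs) = run pos1 (stage2 k n C' pos1 Fs).
  by rewrite /composite run_cat.
have Hlegal : legal_run k C' root_config (composite k n m F Fs).
  by rewrite /composite legal_run_cat -/B S1.
have HG : forall a, a < K -> [/\ perm_eq (gamma a.+1) (iota 1 M), size (gamma a.+1) = M &
    forall b, b < M -> run root_config (Fs a.+1) (nth 0 (gamma a.+1) b) = nth [::] (layer_paths k m) b].
  move=> a Ha; have [_ [P1 P2 P3]] := HFs2 a.+1 ltac:(lia); by split.
have Hg_mem : forall a b, a < K -> b < M -> 1 <= nth 0 (gamma a.+1) b <= M.
  move=> a b Ha Hb; have [P1 P2 _] := HG a Ha.
  have : nth 0 (gamma a.+1) b \in iota 1 M by rewrite -(perm_mem P1) mem_nth // P2.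
  rewrite mem_iota; lia.
set fin := run root_config (composite k n m F Fs).
set pi := mkseq (fun p => (nth 0 tau (p %/ M)).-1 * M + nth 0 (gamma (p %/ M).+1) (p %% M)) (K * M).
have Hfin : forall p, p < K * M -> fin (nth 0 pi p) = nth [::] (layer_paths k (n + m)) p.
  move=> p Hp; rewrite nth_mkseq //.
  have Ha : p %/ M < K by rewrite ltn_divLR.
  have Hb : p %% M < M by rewrite ltn_mod.
  have Hgm := Hg_mem _ _ Ha Hb.
  rewrite -HphiL // /fin Ecomp T2; first last.
  - by rewrite HsizeL.
  - by rewrite mem_iota ltnS; exact: Ha.
  have [_ _ P3] := HG _ Ha.
  rewrite (P3 (p %% M) Hb) [in RHS](divn_eq p M) nth_layer_add //. all: try lia.
have Hpi_size : size pi = K * M by rewrite size_mkseq.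
have Hpi_uniq : uniq pi.
  apply/(uniqP 0) => p q; rewrite !inE Hpi_size => Hp Hq E.
  have := Hfin p Hp; rewrite E Hfin // => /eqP.
  by rewrite nth_uniq ?uniq_layer ?size_layer ?EKM // => /eqP.
have Hpi_sub : {subset pi <= C'}.
  move=> d /mapP [p]; rewrite mem_iota add0n => /andP [_ Hp] ->.
  have Ha : p %/ M < K by rewrite ltn_divLR.
  have Hb : p %% M < M by rewrite ltn_mod.
  have := Hg_mem _ _ Ha Hb; have := Htau_mem _ Ha.
  rewrite HC'm -subn1; nia.
have Hperm : perm_eq pi C'.
  apply: uniq_perm => //; first by rewrite /C' iota_uniq.
  have Hs : size C' <= size pi by rewrite /C' size_iota Hpi_size EKM.
  by have [_] := uniq_min_size Hpi_uniq Hpi_sub Hs.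
have Hmapfin : map fin pi = layer_paths k (n + m).
  apply: (@eq_from_nth _ [::]); first by rewrite size_map size_layer Hpi_size EKM.
  by move=> p; rewrite size_map Hpi_size => Hp; rewrite (nth_map 0) ?Hpi_size // Hfin.
split.
  split => // v; rewrite -(permP Hperm).
  have Ec : count (fun c => fin c == v) pi = count (pred1 v) (map fin pi).
    by rewrite [in RHS]count_map.

  rewrite -/fin Ec.
  rewrite Hmapfin count_uniq_mem ?uniq_layer //; case: (_ \in _) => /=; lia.
exists pi; split.
  split => //; first by rewrite Hpi_size EKM.
  by move=> p; rewrite EKM => Hp; apply: Hfin.
set gs := [seq gamma i | i <- iota 1 K].
have Hgs_size : size gs = K by rewrite size_map size_iota.
have Hnth_gs : forall i, i < K -> nth [::] gs i = gamma i.+1.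
  by move=> i Hi; rewrite (nth_map 0) ?size_iota // nth_iota // add1n.
have Hsizes : map size gs = nseq K M.
  apply: (@eq_from_nth _ 0); first by rewrite size_map size_nseq Hgs_size.
  move=> i; rewrite size_map Hgs_size => Hi.
  rewrite (nth_map [::]) ?Hgs_size // Hnth_gs // nth_nseq Hi.
  by have [_ -> _] := HG i Hi.
have Hsum : forall i, i <= K -> sumn (map size (take i gs)) = i * M.
  by move=> i Hi; rewrite map_take Hsizes take_nseq // sumn_nseq mulnC.
have Hblock : forall i q, i < K -> q < M ->
    nth 0 (block gs pi i) q = (nth 0 tau i).-1 * M + nth 0 (gamma i.+1) q.
  move=> i q Hi Hq; have [_ Hs _] := HG i Hi.
  rewrite /block Hnth_gs // (Hsum i (ltnW Hi)) Hs nth_take // nth_drop nth_mkseq; last exact: ar1.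
  by rewrite divnMDl // divn_small // addn0 modnMDl modn_small.
have Hbsize : forall i, i < K -> size (block gs pi i) = M.
  move=> i Hi; have [_ Hs _] := HG i Hi.
  rewrite /block Hnth_gs // Hs (Hsum i (ltnW Hi)) size_takel // size_drop Hpi_size; exact: ar2.
split.
- by rewrite Htau_sz Hgs_size.
- by rewrite Hsizes sumn_nseq mulnC -EKM.
- move=> i; rewrite Hgs_size => Hi; have [_ Hs _] := HG i Hi; split.
    by rewrite Hbsize // Hnth_gs.
  move=> x y; rewrite Hbsize // => Hx Hy; by rewrite !Hblock // Hnth_gs // ltn_add2l.
- move=> f; rewrite Hgs_size => Hf; split.
    by rewrite size_map size_iota Htau_sz.
  move=> i j; rewrite size_map size_iota => Hi Hj.
  have Hfi : f i < M by have := Hf i Hi; rewrite Hnth_gs //; have [_ -> _] := HG i Hi.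
  have Hfj : f j < M by have := Hf j Hj; rewrite Hnth_gs //; have [_ -> _] := HG j Hj.
  rewrite !(nth_map 0) ?size_iota // !nth_iota // !add0n !Hblock //.
  case: (eqVneq i j) => [->|Hij]; first by rewrite !ltnn.
  apply: cmp_aux; [ | | | exact: Hg_mem | exact: Hg_mem].
  + by have /andP[] := Htau_mem i Hi.
  + by have /andP[] := Htau_mem j Hj.
  + by rewrite nth_uniq ?Htau_sz.
Qed.
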